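(* Let $\Omega_2=\{\omega_1,\omega_2\}$ with $\omega_1\neq\omega_2$, and $\mathcal{A}_2=2^{\Omega_2}$. A $q$-measure $\mu$ on $\mathcal{A}_2$ actualizes the coevent $\omega_1^*\oplus\omega_1^*\omega_2^*$ if and only if $\mu(\{\omega_2\})=0$ and $\mu(\Omega_2)\le\mu(\{\omega_1\})$.
   Context: Let $\Omega$ be a finite nonempty set and $\mathcal{A}=2^\Omega$. A coevent is a map $\phi:\mathcal{A}\to\{0,1\}$ with $\phi(\emptyset)=0$. For $\omega\in\Omega$ the evaluation map $\omega^*$ is the coevent with $\omega^*(A)=1$ if $\omega\in A$ and $0$ otherwise. Coevents are combined pointwise: $(\phi\oplus\psi)(A)=\phi(A)+\psi(A) \bmod 2$ and $(\phi\psi)(A)=\phi(A)\psi(A)$. For $f:\Omega\to[0,\infty)$ and a coevent $\phi$, the $q$-integral is $\int f\,d\phi=\int_0^\infty \phi(\{\omega\in\Omega: f(\omega)>\lambda\})\,d\lambda$ (Lebesgue measure in $\lambda$), and for $A\in\mathcal{A}$, $\int_A f\,d\phi=\int f\chi_A\,d\phi$. A $q$-measure is a map $\mu:\mathcal{A}\to[0,\infty)$ such that for all pairwise disjoint $A,B,C\in\mathcal{A}$: $\mu(A\cup B\cup C)=\mu(A\cup B)+\mu(A\cup C)+\mu(B\cup C)-\mu(A)-\mu(B)-\mu(C)$. The $q$-measure $\mu$ actualizes $\phi$ if there is a symmetric function $f:\Omega\times\Omega\to(0,\infty)$ such that for all $A\in\mathcal{A}$, $\mu(A)=\int g_A\,d\phi$,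 where $g_A(\omega')=\int_A f(\cdot,\omega')\,d\phi$ (the $q$-integral over $A$ of $\omega\mapsto f(\omega,\omega')$). *)

(* Defs.v *)
From Stdlib Require Import Reals Bool.
Open Scope R_scope.

Definition event (Om : Type) := Om -> bool.

Definition is_coevent {Om : Type} (phi : event Om -> bool) : Prop :=
  phi (fun _ => false) = false.

Definition evalc {Om : Type} (w : Om) : event Om -> bool := fun A => A w.

Definition cxor {Om : Type} (phi psi : event Om -> bool) : event Om -> bool :=
  fun A => xorb (phi A) (psi A).
Definition cmul {Om : Type} (phi psi : event Om -> bool) : event Om -> bool :=
  fun A => andb (phi A) (psi A).

Definition level_set {Om : Type} (f : Om -> R) (l : R) : event Om :=
  fun w => if Rlt_dec l (f w) then true else false.

Definition qintegrand {Om : Type} (f : Om -> R) (phi : event Om -> bool) : R -> R :=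
  fun l => if phi (level_set f l) then 1 else 0.

(* is_qint f phi I : "the q-integral  int f dphi = int_0^oo phi({f>l}) dl
   equals I".  f is required to be bounded; since phi(empty)=0 the integrand
   vanishes for l >= sup f, so the integral over [0,oo) equals the
   (Riemann) integral over [0,M] for every bound M >= 0 of f. *)
Definition is_qint {Om : Type} (f : Om -> R) (phi : event Om -> bool) (I : R) : Prop :=
  (exists M, 0 <= M /\ forall w, f w <= M) /\
  forall M, 0 <= M -> (forall w, f w <= M) ->
    exists pr : Riemann_integrable (qintegrand f phi) 0 M, RiemannInt pr = I.

Definition chi {Om : Type} (A : event Om) : Om -> R := fun w => if A w then 1 else 0.

Definition disjoint {Om : Type} (A B : event Om) : Prop := forall w, A w && B w = false.
Definition union {Om : Type} (A B : event Om) : event Om := fun w => A w || B w.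

Definition is_qmeasure {Om : Type} (mu : event Om -> R) : Prop :=
  (forall A, 0 <= mu A) /\
  forall A B C, disjoint A B -> disjoint A C -> disjoint B C ->
    mu (union (union A B) C) =
      mu (union A B) + mu (union A C) + mu (union B C) - mu A - mu B - mu C.

(* mu actualizes phi: there is a symmetric f : Omega x Omega -> (0,oo) with
   mu(A) = int g_A dphi, where g_A(w') = int_A f(., w') dphi
                                       = int f(., w') chi_A dphi. *)
Definition actualizes {Om : Type} (mu : event Om -> R) (phi : event Om -> bool) : Prop :=
  exists f : Om -> Om -> R,
    (forall x y, f x y = f y x) /\ (forall x y, 0 < f x y) /\
    forall A : event Om, exists gA : Om -> R,
      (forall w', is_qint (fun w => f w w' * chi A w) phi (gA w')) /\
      is_qint gA phi (mu A).

Inductive Omega2 : Type := om1 | om2.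

Definition single2 (w : Omega2) : event Omega2 :=
  fun x => match w, x with
           | om1, om1 | om2, om2 => true
           | _, _ => false
           end.

Definition full2 : event Omega2 := fun _ => true.

(* Main.v *)
Require Import Defs.
From Stdlib Require Import Reals RList Bool Lra Lia FunctionalExtensionality.
Open Scope R_scope.

Lemma adapted_const (f : R -> R) (a b c : R) : a <= b ->
  (forall x, a < x < b -> f x = c) ->
  adapted_couple f a b (cons a (cons b nil)) (cons c nil).
Proof.
  intros Hab H; unfold adapted_couple; repeat split.
  - unfold ordered_Rlist; intros i Hi; simpl in Hi; inversion Hi;
      [ simpl; assumption | lia ].
  - simpl; unfold Rmin; destruct (Rle_dec a b); [reflexivity | lra].
  - simpl; unfold Rmax; destruct (Rle_dec a b); [reflexivity | lra].
  - unfold constant_D_eq, open_interval; intros i Hi x Hx; simpl in Hi;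
      destruct i; [ apply H; exact Hx | lia ].
Qed.

Lemma int_const_open (f : R -> R) (a b c : R) : a <= b ->
  (forall x, a < x < b -> f x = c) -> Riemann_integrable f a b.
Proof.
  intros Hab H eps.
  assert (S : IsStepFun f a b).
  { exists (cons a (cons b nil)); exists (cons c nil); apply adapted_const; auto. }
  exists (mkStepFun S). exists (mkStepFun (StepFun_P4 a b 0)). split.
  - intros t _; simpl. unfold fct_cte. rewrite Rminus_diag, Rabs_R0; lra.
  - rewrite StepFun_P18, Rmult_0_l, Rabs_R0. apply cond_pos.
Qed.

Lemma int_const_open_val (f : R -> R) (a b c : R) (pr : Riemann_integrable f a b) :
  a <= b -> (forall x, a < x < b -> f x = c) -> RiemannInt pr = c * (b - a).
Proof.
  intros Hab H.
  rewrite (RiemannInt_P18 pr (RiemannInt_P14 a b c) Hab).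
  - apply RiemannInt_P15.
  - intros; unfold fct_cte; auto.
Qed.

Definition phi0 : event Omega2 -> bool := cxor (evalc om1) (cmul (evalc om1) (evalc om2)).

Lemma qintegrand_eq (f : Omega2 -> R) l :
  qintegrand f phi0 l =
  if Rlt_dec l (f om1) then (if Rlt_dec l (f om2) then 0 else 1) else 0.
Proof.
  unfold qintegrand, phi0, cxor, cmul, evalc, level_set.
  destruct (Rlt_dec l (f om1)); destruct (Rlt_dec l (f om2)); reflexivity.
Qed.

Lemma key_int (f : Omega2 -> R) : 0 <= f om1 -> 0 <= f om2 ->
  is_qint f phi0 (Rmax 0 (f om1 - f om2)).
Proof.
  intros h1 h2. split.
  - exists (Rmax (f om1) (f om2)). split.
    + apply Rle_trans with (f om1); [lra | apply Rmax_l].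
    + intros []; [apply Rmax_l | apply Rmax_r].
  - intros M HM HB.
    set (p := f om2). set (q := Rmax p (f om1)).
    assert (Hpq : p <= q) by apply Rmax_l.
    assert (HqM : q <= M).
    { unfold q, Rmax; destruct Rle_dec; [apply HB | apply HB]. }
    assert (HpM : p <= M) by (apply HB).
    assert (E1 : forall x, 0 < x < p -> qintegrand f phi0 x = 0).
    { intros x Hx; rewrite qintegrand_eq.
      destruct Rlt_dec; [destruct Rlt_dec; [reflexivity|]|reflexivity].
      unfold p in Hx; lra. }
    assert (E2 : forall x, p < x < q -> qintegrand f phi0 x = 1).
    { intros x Hx; rewrite qintegrand_eq.
      unfold q, Rmax in Hx; destruct (Rle_dec p (f om1)).
      - destruct Rlt_dec; [destruct Rlt_dec; [unfold p in Hx; lra|reflexivity]|lra].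
      - lra. }
    assert (E3 : forall x, q < x < M -> qintegrand f phi0 x = 0).
    { intros x Hx; rewrite qintegrand_eq.
      destruct Rlt_dec; [|reflexivity].
      assert (f om1 <= q) by apply Rmax_r. lra. }
    pose proof (int_const_open _ 0 p 0 h2 E1) as I1.
    pose proof (int_const_open _ p q 1 Hpq E2) as I2.
    pose proof (int_const_open _ q M 0 HqM E3) as I3.
    pose proof (RiemannInt_P24 I1 I2) as I12.
    pose proof (RiemannInt_P24 I12 I3) as I123.
    exists I123.
    rewrite <- (RiemannInt_P26 I12 I3 I123).
    rewrite <- (RiemannInt_P26 I1 I2 I12).
    rewrite (int_const_open_val _ _ _ _ I1 h2 E1).
    rewrite (int_const_open_val _ _ _ _ I2 Hpq E2).
    rewrite (int_const_open_val _ _ _ _ I3 HqM E3).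
    unfold q, p, Rmax; destruct Rle_dec; destruct Rle_dec; lra.
Qed.

Lemma qint_unique {Om : Type} (f : Om -> R) phi I J :
  is_qint f phi I -> is_qint f phi J -> I = J.
Proof.
  intros [[M [HM HB]] H1] [_ H2].
  destruct (H1 M HM HB) as [p1 E1]. destruct (H2 M HM HB) as [p2 E2].
  rewrite <- E1, <- E2. apply RiemannInt_P5.
Qed.

Lemma ev_cases (A : event Omega2) :
  A = (fun _ => false) \/ A = single2 om1 \/ A = single2 om2 \/ A = full2.
Proof.
  destruct (A om1) eqn:E1; destruct (A om2) eqn:E2.
  - right; right; right; extensionality x; destruct x; auto.
  - right; left; extensionality x; destruct x; auto.
  - right; right; left; extensionality x; destruct x; auto.
  - left; extensionality x; destruct x; auto.
Qed.

Definition gdef (f : Omega2 -> Omega2 -> R) (A : event Omega2) (w' : Omega2) : R :=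
  Rmax 0 (f om1 w' * chi A om1 - f om2 w' * chi A om2).

Lemma chi_nonneg {Om : Type} (A : event Om) w : 0 <= chi A w.
Proof. unfold chi; destruct (A w); lra. Qed.

Lemma g_int (f : Omega2 -> Omega2 -> R) (A : event Omega2) w' :
  (forall x y, 0 < f x y) ->
  is_qint (fun w => f w w' * chi A w) phi0 (gdef f A w').
Proof.
  intros Hp. unfold gdef.
  apply (key_int (fun w => f w w' * chi A w));
  apply Rmult_le_pos; try apply chi_nonneg; left; apply Hp.
Qed.

Lemma g_nonneg f A w' : 0 <= gdef f A w'.
Proof. apply Rmax_l. Qed.

Theorem theorem4p4 (mu : event Omega2 -> R) :
  is_qmeasure mu ->
  (actualizes mu (cxor (evalc om1) (cmul (evalc om1) (evalc om2))) <->
   (mu (single2 om2) = 0 /\ mu full2 <= mu (single2 om1))).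
Proof.
  intros [Hnn Hq]. fold phi0. split.
  - intros [f [Hs [Hp H]]].
    assert (Hmu : forall A, mu A = Rmax 0 (gdef f A om1 - gdef f A om2)).
    { intro A. destruct (H A) as [gA [Hg Hm]].
      assert (Eg : forall w', gA w' = gdef f A w').
      { intro w'. apply (qint_unique _ _ _ _ (Hg w') (g_int f A w' Hp)). }
      assert (Hk := key_int gA).
      rewrite (Eg om1), (Eg om2) in Hk.
      apply (qint_unique _ _ _ _ Hm); apply Hk; apply g_nonneg. }
    rewrite !Hmu. unfold gdef, chi; simpl.
    pose proof (Hp om1 om1); pose proof (Hp om1 om2); pose proof (Hp om2 om2).
    rewrite (Hs om2 om1).
    split; unfold Rmax; repeat destruct Rle_dec; lra.
  - intros [H2 H12].
    set (a := mu (single2 om1)). set (b := mu full2).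
    assert (Hba : b <= a) by exact H12.
    assert (Ha : 0 <= a) by apply Hnn. assert (Hb : 0 <= b) by apply Hnn.
    set (e := fun _ : Omega2 => false).
    assert (He : mu e = 0).
    { assert (D : forall X : event Omega2, disjoint X e).
      { intros X w; unfold e; destruct (X w); reflexivity. }
      assert (D' : disjoint e e) by (intro w; reflexivity).
      pose proof (Hq (single2 om1) e e (D _) (D _) D') as Q.
      assert (U1 : union (single2 om1) e = single2 om1).
      { extensionality x; destruct x; reflexivity. }
      assert (U2 : union e e = e).
      { extensionality x; destruct x; reflexivity. }
      rewrite U1, U1, U2 in Q. lra. }
    set (f := fun x y : Omega2 => match x, y with
                | om1, om1 => 2 * a + 1
                | om2, om2 => b + 1
                | _, _ => a + 1 end).
    assert (Hp : forall x y, 0 < f x y).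
    { intros [] []; simpl; lra. }
    exists f. split; [intros [] []; reflexivity|]. split; [exact Hp|].
    intro A. exists (gdef f A). split.
    + intro w'. apply g_int; exact Hp.
    + replace (mu A) with (Rmax 0 (gdef f A om1 - gdef f A om2)).
      * apply key_int; apply g_nonneg.
      * destruct (ev_cases A) as [E|[E|[E|E]]]; subst A;
        [fold e; rewrite He | fold a | rewrite H2 | fold b];
        unfold gdef, chi; simpl; unfold Rmax; repeat destruct Rle_dec; lra.
Qed.
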